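(* Consider a network given by a finite directed graph whose vertex set consists of one or more gateway nodes together with $N\ge 1$ non-gateway nodes indexed by $\Gamma=\{1,\dots,N\}$, and whose directed edges (links) are indexed by $\Lambda=\{1,\dots,L\}$. For each non-gateway node $i\in\Gamma$ let $I_i\subseteq\Lambda$ be the set of links entering $i$ and $O_i\subseteq\Lambda$ the set of links leaving $i$. Let $S_l>0$ ($l\in\Lambda$), $n>0$ and $I_{k\to l}\ge 0$ ($k,l\in\Lambda$, $k\neq l$) be given, and for every nonempty $A\subseteq\Lambda$ and $l\in A$ define $$\gamma_{l,A}=\log\Big(1+\frac{S_l}{n+\sum_{k\in A\setminus\{l\}} I_{k\to l}}\Big).$$ Let $\alpha_i>0$ ($i\in\Gamma$) be given weights. Consider the linear program, over variables $x_A$ (one for each nonempty $A\subseteq\Lambda$), $r_l$ ($l\in\Lambda$), $d_i$ ($i\in\Gamma$) and $d$: maximize $d$ subject to $\sum_{A} x_A=1$; $r_l=\sum_{A\ni l} x_A\gamma_{l,A}$ for all $l\in\Lambda$; $\sum_{l\in I_i} r_l-\sum_{k\in O_i} r_k=d_i$ for all $i\in\Gamma$; $d_i\ge \alpha_i d$ for all $i\in\Gamma$; $x_A\ge 0$ for all nonempty $A\subseteq\Lambda$. Then this linear program has an optimal solution in which at most $N$ of the variables $x_A$ are nonzero. *)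

(* Defs.v *)
From Stdlib Require Import Reals.
From mathcomp Require Import all_boot.
Set Implicit Arguments. Unset Strict Implicit. Unset Printing Implicit Defensive.

Open Scope R_scope.

(* Vertices: G gateway nodes (inl) and N non-gateway nodes (inr, i.e. Gamma). *)
Definition vertex (G N : nat) : finType := ('I_G + 'I_N)%type.


Definition gamma (L : nat) (S : 'I_L -> R) (n : R) (Intf : 'I_L -> 'I_L -> R)
  (l : 'I_L) (A : {set 'I_L}) : R :=
  ln (1 + S l / (n + \big[Rplus/R0]_(k | (k \in A) && (k != l)) Intf k l)).

(* Feasibility of (x, r, dv, d) for the LP. x is indexed by all subsets of
   Lambda; only nonempty subsets are variables (the value at set0 is unused). *)
Definition feasible (G N L : nat) (src dst : 'I_L -> vertex G N)
  (S : 'I_L -> R) (n : R) (Intf : 'I_L -> 'I_L -> R) (alpha : 'I_N -> R)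
  (x : {set 'I_L} -> R) (r : 'I_L -> R) (dv : 'I_N -> R) (d : R) : Prop :=
  (\big[Rplus/R0]_(A : {set 'I_L} | A != set0) x A = 1) /\
  (forall l : 'I_L, r l = \big[Rplus/R0]_(A : {set 'I_L} | (A != set0) && (l \in A))
                             (x A * gamma S n Intf l A)) /\
  (forall i : 'I_N, \big[Rplus/R0]_(l : 'I_L | dst l == inr i) r l
                    - \big[Rplus/R0]_(k : 'I_L | src k == inr i) r k = dv i) /\
  (forall i : 'I_N, dv i >= alpha i * d) /\
  (forall A : {set 'I_L}, A != set0 -> x A >= 0).

Definition optimal (G N L : nat) (src dst : 'I_L -> vertex G N)
  (S : 'I_L -> R) (n : R) (Intf : 'I_L -> 'I_L -> R) (alpha : 'I_N -> R)
  (x : {set 'I_L} -> R) (r : 'I_L -> R) (dv : 'I_N -> R) (d : R) : Prop :=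
  feasible src dst S n Intf alpha x r dv d /\
  (forall x' r' dv' d', feasible src dst S n Intf alpha x' r' dv' d' -> d' <= d).

(* Main.v *)
Require Import Defs.
From Stdlib Require Import Reals.
From mathcomp Require Import all_boot.
From mathcomp Require Import all_order all_algebra.
From mathcomp Require Import Rstruct.
From mathcomp Require Import ring lra zify.
From Stdlib Require Import Classical.
Import Order.TTheory GRing.Theory Num.Theory.
Set Implicit Arguments. Unset Strict Implicit. Unset Printing Implicit Defensive.
Open Scope R_scope.

Section Core1.
Local Open Scope ring_scope.

Lemma sum_opt (F : nmodType) (V : finType) (f : option V -> F) :
  \sum_(u : option V) f u = f None + \sum_v f (Some v).
Proof.
rewrite (bigD1 None) //=; congr (_ + _).
rewrite (reindex_omap Some id) //=.
  by apply: eq_bigl => v; rewrite eqxx.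
by case.
Qed.

Lemma card_optS (V : finType) (T : {set V}) :
  #|None |: (Some @: T)| = #|T|.+1.
Proof.
rewrite cardsU1 card_imset; last by move=> a b [].
have -> : None \notin Some @: T by apply/imsetP => [[x _]].
by [].
Qed.

Lemma kernel_nz (F : fieldType) (U E : finType) (T : {set U}) (Q : {set E})
  (a : E -> U -> F) : (#|Q| < #|T|)%N ->
  exists y : U -> F, (exists u, y u != 0) /\ (forall u, u \notin T -> y u = 0) /\
    forall e, e \in Q -> \sum_u a e u * y u = 0.
Proof.
move=> hQT.
pose M : 'M[F]_(#|T|, #|Q|) := \matrix_(j, k) a (enum_val k) (enum_val j).
have hk : kermx M != 0.
  rewrite -mxrank_eq0 mxrank_ker.
  have := rank_leq_col M; rewrite subn_eq0 -ltnNge => h.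
  by apply: leq_trans hQT.
have [i0 [j0 hij]] : exists i j, kermx M i j != 0.
  apply: NNPP => H; move/eqP: hk; apply; apply/matrixP => i j.
  rewrite [RHS]mxE; apply/eqP; apply/negPn/negP => h.
  by apply: H; exists i, j.
pose w := row i0 (kermx M).
have hw : w *m M = 0 by rewrite /w -row_mul mulmx_ker row0.
pose y := fun u => \sum_j (enum_val j == u)%:R * w 0 j.
exists y; split; [|split].
- exists (enum_val j0); rewrite /y (bigD1 j0) //= eqxx mul1r big1 ?addr0.
    by rewrite /w mxE.
  move=> j hj; case: eqP => [/enum_val_inj h|_]; last by rewrite mul0r.
  by rewrite h eqxx in hj.
- move=> u hu; rewrite /y big1 // => j _.
  case: eqP => [h|_]; last by rewrite mul0r.
  by move: (enum_valP j); rewrite h => h'; rewrite h' in hu.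
- move=> e he.
  pose k : 'I_#|Q| := enum_rank_in he e.
  have hke : enum_val k = e by rewrite /k enum_rankK_in.
  have := congr1 (fun m : 'M[F]_(1, #|Q|) => m ord0 k) hw.
  rewrite !mxE => h; rewrite -[RHS]h.
  rewrite /y; under eq_bigr do rewrite mulr_sumr.
  rewrite exchange_big /=; apply: eq_bigr => j _.
  rewrite (bigD1 (enum_val j)) //= eqxx mul1r big1 ?addr0.
    by rewrite !mxE hke mulrC.
  move=> u hu; rewrite eq_sym (negbTE hu) mul0r mulr0 //.
Qed.

Lemma fmin (F : realDomainType) (K : finType) (Q : pred K) (f : K -> F) k0 :
  Q k0 -> exists k, Q k /\ forall k', Q k' -> f k <= f k'.
Proof.
move=> h; case: (arg_minP f h) => k Qk H; exists k; split => //.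
Qed.

End Core1.

Section Core.
Local Open Scope ring_scope.
Variable F : realFieldType.
Variables (V : finType) (N : nat) (P : pred V) (c : 'I_N -> V -> F).

Definition gf (i : 'I_N) (x : V -> F) := \sum_(v | P v) c i v * x v.
Definition simp (x : V -> F) := (forall v, P v -> 0 <= x v) /\ \sum_(v | P v) x v = 1.
Definition lev (x : V -> F) d := forall i, d <= gf i x.
Definition supp (x : V -> F) : {set V} := [set v | P v & x v != 0].
Definition tight x d : {set 'I_N} := [set i | gf i x == d].
Definition nontriv (T : {set V}) (I : {set 'I_N}) :=
  exists (y : V -> F) (del : F), ((exists v, y v != 0) \/ del != 0) /\
   (forall v, v \notin T -> y v = 0) /\ \sum_(v | P v) y v = 0 /\
   (forall i, i \in I -> gf i y = del).
Definition basic x d := simp x /\ lev x d /\ ~ nontriv (supp x) (tight x d).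


Lemma gf_lin i x y t : gf i (fun v => x v + t * y v) = gf i x + t * gf i y.
Proof.
rewrite /gf mulr_sumr -big_split /=; apply: eq_bigr => v _; ring.
Qed.

Lemma supp_basic x d : basic x d -> (#|supp x| <= N)%N.
Proof.
case=> _ [_ hnt].
suff : (#|supp x| <= #|tight x d|)%N.
  move=> h; apply: leq_trans h _; rewrite -[X in (_ <= X)%N]card_ord; exact: max_card.
rewrite leqNgt; apply/negP => hlt; apply: hnt.
pose T := supp x; pose I := tight x d.
pose a := fun (e : option 'I_N) (u : option V) =>
  match e, u with
  | None, Some v => 1 | None, None => 0
  | Some i, Some v => c i v | Some i, None => -1 end.
have hc : (#|None |: (Some @: I)| < #|None |: (Some @: T)|)%N by rewrite !card_optS.
have [sol [[u hu] [h0 heq]]] := kernel_nz a hc.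
have hTP : forall v, v \in T -> P v by move=> v; rewrite inE => /andP[].
have yoff : forall v, v \notin T -> sol (Some v) = 0.
  move=> v hv; apply: h0; rewrite !inE /=; apply/imsetP => [[w hw [e]]].
  by rewrite e hw in hv.
have sumP : forall g : V -> F, (forall v, v \notin T -> g v = 0) ->
    \sum_(v | P v) g v = \sum_v g v.
  move=> g hg; rewrite [RHS](bigID P) /= [X in _ + X]big1 ?addr0 // => v hv.
  apply: hg; apply/negP => /hTP; by rewrite (negbTE hv).
exists (fun v => sol (Some v)), (sol None); split; [|split; [|split]].
- by case: u hu => [v|] hu; [left; exists v | right].
- exact: yoff.
- have := heq None; rewrite !inE eqxx /= => /(_ isT).
  rewrite sum_opt /= mul0r add0r => h; rewrite sumP // -[RHS]h.
  by apply: eq_bigr => v _; rewrite mul1r.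
- move=> i hi; have := heq (Some i).
  rewrite !inE /=; move=> /(_ (imset_f Some hi)); rewrite sum_opt /= => h.
  rewrite /gf (sumP (fun v => c i v * sol (Some v))); last by move=> v hv; rewrite yoff ?mulr0.
  by move/eqP: h; rewrite mulN1r addrC subr_eq0 => /eqP.
Qed.

Lemma basic_uniq x1 d1 x2 d2 : basic x1 d1 -> simp x2 -> lev x2 d2 ->
  supp x2 = supp x1 -> tight x2 d2 = tight x1 d1 -> d1 = d2.
Proof.
case=> [[p1 s1] [l1 hnt]] [p2 s2] l2 hs ht.
apply: NNPP => hne; apply: hnt.
exists (fun v => if P v then x1 v - x2 v else 0), (d1 - d2); split; [|split; [|split]].
- by right; rewrite subr_eq0; apply/eqP.
- move=> v; case hv: (P v) => // hn.
  have hx1 : x1 v = 0 by apply/eqP; move: hn; rewrite inE hv /= negbK.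
  have hx2 : x2 v = 0 by apply/eqP; move: hn; rewrite -hs inE hv /= negbK.
  by rewrite hx1 hx2 subr0.
- rewrite (eq_bigr (fun v => x1 v - x2 v)); last by move=> v ->.
  by rewrite sumrB s1 s2 subrr.
- move=> i hi.
  have h1 : gf i x1 = d1 by apply/eqP; move: hi; rewrite inE.
  have h2 : gf i x2 = d2 by apply/eqP; move: hi; rewrite -ht inE.
  rewrite /gf (eq_bigr (fun v => c i v * x1 v - c i v * x2 v)); last by move=> v ->; rewrite mulrBr.
  by rewrite sumrB -h1 -h2.
Qed.

Lemma step_pos x d y del : (0 < N)%N -> simp x -> lev x d -> 0 <= del ->
  ((exists v, y v != 0) \/ del != 0) ->
  (forall v, v \notin supp x -> y v = 0) -> \sum_(v | P v) y v = 0 ->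
  (forall i, i \in tight x d -> gf i y = del) ->
  exists x' d', simp x' /\ lev x' d' /\ d <= d' /\ supp x' \subset supp x /\
    tight x d \subset tight x' d' /\
    (supp x' \proper supp x \/ tight x d \proper tight x' d').
Proof.
move=> hN [px sx] lx hdel hnz yoff ysum ytight.
pose I := tight x d.
pose ev := fun e : (V + 'I_N)%type => match e with
  | inl v => (v \in supp x) && (y v < 0)
  | inr i => (i \notin I) && (gf i y < del) end.
pose ratio := fun e : (V + 'I_N)%type => match e with
  | inl v => x v / (- y v)
  | inr i => (gf i x - d) / (del - gf i y) end.
have hyP : forall v, y v != 0 -> v \in supp x.
  by move=> v hv; apply: contraNT hv => /yoff ->.
have [e0 he0] : exists e0, ev e0.
  case: (classic (exists v, y v != 0)) => [[v hv]|hny].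
    have [w hw] : exists w, P w && (y w < 0).
      apply: NNPP => H.
      have hge : forall w, P w -> 0 <= y w.
        move=> w pw; rewrite leNgt; apply/negP => hlt; apply: H; exists w; by rewrite pw.
      have := psumr_eq0P hge ysum.
      have pv : P v by move: (hyP v hv); rewrite inE => /andP[].
      by move=> /(_ v pv) /eqP; rewrite (negbTE hv).
    case/andP: hw => pw yw; exists (inl w); rewrite /ev /= yw andbT; apply: hyP.
    by rewrite lt_eqF.
  have y0 : forall v, y v = 0.
    move=> v; apply/eqP; rewrite -[_ == _]negbK; apply/negP => h; apply: hny; by exists v.
  have hd : del != 0 by case: hnz.
  have gy0 : forall i, gf i y = 0 by move=> i; rewrite /gf big1 // => v _; rewrite y0 mulr0.
  exists (inr (Ordinal hN)); rewrite /ev /= gy0 lt_def hd hdel andbT.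
  rewrite ?andbT; apply/negP => hi; move: (ytight _ hi); rewrite gy0 => h0.
  by rewrite -h0 eqxx in hd.
have [e [hev hmin]] := fmin ratio he0.
pose t := ratio e.
have ht0 : 0 <= t.
  rewrite /t; clear t; case: e hev {hmin} => [v|i] /= /andP[h1 h2].
    have pv : P v by move: h1; rewrite inE => /andP[].
    by apply: divr_ge0; [exact: px | rewrite oppr_ge0 ltW].
  apply: divr_ge0; last by rewrite subr_ge0 ltW.
  by rewrite subr_ge0.
have hI : forall i, i \in I -> gf i x = d by move=> i; rewrite inE => /eqP.
have hsub : supp (fun v => x v + t * y v) \subset supp x.
  apply/subsetP => v; rewrite !inE => /andP[pv hv]; rewrite pv /=.
  apply: contraNT hv => /negPn/eqP hx.
  have : v \notin supp x by rewrite inE hx eqxx andbF.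
  by move/yoff ->; rewrite hx mulr0 addr0.
have htsub : tight x d \subset tight (fun v => x v + t * y v) (d + t * del).
  by apply/subsetP => i hi; rewrite inE gf_lin hI // ytight //.
have hsub' := hsub; have htsub' := htsub.
exists (fun v => x v + t * y v), (d + t * del); split; [|split; [|split; [|split; [|split]]]].
- split.
    move=> v pv; case: (leP 0 (y v)) => hy.
      by apply: addr_ge0; [exact: px | exact: mulr_ge0].
    have hv : ev (inl v).
      by rewrite /ev /= hy andbT; apply: hyP; rewrite lt_eqF.
    have hle : t <= x v / - y v := hmin _ hv.
    have hyp : 0 < - y v by rewrite oppr_gt0.
    rewrite -(ler_pM2r hyp) mulrAC -mulrA divff ?mulr1 in hle; last by rewrite gt_eqF.
    rewrite mulrN in hle; lra.
  by rewrite big_split /= -mulr_sumr sx ysum mulr0 addr0.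
- move=> i; rewrite gf_lin.
  case hiI: (i \in I); first by rewrite hI // ytight.
  case: (leP del (gf i y)) => hy.
    have := lx i; have := ler_wpM2l ht0 hy; lra.
  have hv : ev (inr i) by rewrite /ev /= hiI hy.
  have hle : t <= (gf i x - d) / (del - gf i y) := hmin _ hv.
  have hyp : 0 < del - gf i y by rewrite subr_gt0.
  rewrite -(ler_pM2r hyp) mulrAC -mulrA divff ?mulr1 in hle; last by rewrite gt_eqF.
  rewrite mulrBr in hle; lra.
- by have := mulr_ge0 ht0 hdel; lra.
- exact: hsub.
- exact: htsub.
move: hsub' htsub'; rewrite /t; clear t hsub htsub ht0; case: e hev hmin => [v|i] /andP[h1 h2] hmin hsub' htsub'.
  left; apply/properP; split; first exact: hsub'.
  exists v => //; rewrite inE negb_and negbK; apply/orP; right.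
  rewrite /ratio mulrAC -mulrA invrN mulrN divrr ?mulrN1 ?subrr // unitfE lt_eqF //.
right; apply/properP; split; first exact: htsub'.
exists i => //; rewrite inE gf_lin /ratio.
have hyp : del - gf i y != 0 by rewrite gt_eqF // subr_gt0.
apply/eqP; set q := (gf i x - d) / (del - gf i y).
have hq : q * (del - gf i y) = gf i x - d by rewrite /q divfK.
rewrite mulrBr in hq; lra.
Qed.


Lemma gfN i y : gf i (fun v => - y v) = - gf i y.
Proof. by rewrite /gf -sumrN; apply: eq_bigr => v _; rewrite mulrN. Qed.

Lemma step x d : (0 < N)%N -> simp x -> lev x d -> nontriv (supp x) (tight x d) ->
  exists x' d', simp x' /\ lev x' d' /\ d <= d' /\ supp x' \subset supp x /\
    tight x d \subset tight x' d' /\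
    (supp x' \proper supp x \/ tight x d \proper tight x' d').
Proof.
move=> hN sx lx [y [del [hnz [yoff [ysum yt]]]]].
case: (leP 0 del) => hd; first exact: (step_pos (y:=y) hN sx lx hd).
apply: (step_pos (y:=fun v => - y v) (del := - del) hN sx lx).
- by rewrite oppr_ge0 ltW.
- case: hnz => [[v hv]|hv]; [left; exists v | right]; by rewrite oppr_eq0.
- by move=> v /yoff ->; rewrite oppr0.
- by rewrite sumrN ysum oppr0.
- by move=> i /yt <-; rewrite gfN.
Qed.

Lemma card_le_N (A : {set 'I_N}) : (#|A| <= N)%N.
Proof. by rewrite -[X in (_ <= X)%N]card_ord; exact: max_card. Qed.

Lemma reduce m : (0 < N)%N -> forall x d, simp x -> lev x d ->
  (#|supp x| + (N - #|tight x d|) <= m)%N -> exists x' d', basic x' d' /\ d <= d'.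
Proof.
move=> hN; elim: m => [|m IH] x d sx lx hm;
  (case: (classic (nontriv (supp x) (tight x d))) => hnt;
   last by exists x, d; split => //; split => //).
all: have [x' [d' [sx' [lx' [hdd [hs [ht hpr]]]]]]] := step hN sx lx hnt.
all: have h1 := subset_leq_card hs; have h2 := subset_leq_card ht.
all: have h3 := card_le_N (tight x' d'); have h4 := card_le_N (tight x d).
all: have hlt : (#|supp x'| + (N - #|tight x' d'|) < #|supp x| + (N - #|tight x d|))%N
  by case: hpr => /proper_card; lia.
- lia.
- have [x'' [d'' [hb hle]]] := IH x' d' sx' lx' (ltac:(lia)).
  by exists x'', d''; split => //; apply: le_trans hle.
Qed.

Lemma rel_max (K : finType) (Pk : K -> F -> Prop) :
  (forall k a b, Pk k a -> Pk k b -> a = b) -> (exists k a, Pk k a) ->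
  exists k a, Pk k a /\ forall k' b, Pk k' b -> b <= a.
Proof.
move=> hf [k [a hk]].
suff H : forall s : seq K, (exists k a, k \in s /\ Pk k a) ->
   exists k a, Pk k a /\ forall k' b, k' \in s -> Pk k' b -> b <= a.
  have [k1 [a1 [h1 h2]]] := H (enum K) (ex_intro _ k (ex_intro _ a (conj (mem_enum _ k) hk))).
  by exists k1, a1; split => // k' b; apply: h2; rewrite mem_enum.
elim => [[? [? [//]]]|k0 s IH] hex.
case: (classic (exists k a, k \in s /\ Pk k a)) => hs.
  have [k1 [a1 [h1 h2]]] := IH hs.
  case: (classic (exists a0, Pk k0 a0)) => [[a0 h0]|hn0].
    case: (leP a0 a1) => ha.
      exists k1, a1; split => // k' b; rewrite in_cons => /orP[/eqP ->|hk'] hb.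
        by rewrite (hf _ _ _ hb h0).
      exact: h2 hk' hb.
    exists k0, a0; split => // k' b; rewrite in_cons => /orP[/eqP ->|hk'] hb.
      by rewrite (hf _ _ _ hb h0).
    by apply: le_trans (h2 _ _ hk' hb) (ltW ha).
  exists k1, a1; split => // k' b; rewrite in_cons => /orP[/eqP ->|hk'] hb.
    by case: hn0; exists b.
  exact: h2 hk' hb.
case: hex => k1 [a1 [hk1 h1]].
move: hk1; rewrite in_cons => /orP[/eqP Ek|hk1]; last by case: hs; exists k1, a1.
subst k1; exists k0, a1; split => // k' b; rewrite in_cons => /orP[/eqP ->|hk'] hb.
  by rewrite (hf _ _ _ hb h1).
by case: hs; exists k', b.
Qed.

Theorem core : (0 < N)%N -> (exists v, P v) ->
  exists x d, simp x /\ lev x d /\ (forall x' d', simp x' -> lev x' d' -> d' <= d) /\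
    (#|supp x| <= N)%N.
Proof.
move=> hN [v0 pv0].
pose x0 := fun v => (v == v0)%:R : F.
have sx0 : simp x0.
  split; first by move=> v _; rewrite /x0 ler0n.
  rewrite (bigD1 v0) //= /x0 eqxx big1 ?addr0 // => v /andP[_ h].
  by rewrite (negbTE h).
pose d0 := - \sum_i `|gf i x0|.
have lx0 : lev x0 d0.
  move=> i; rewrite /d0 (bigD1 i) //=.
  have h1 : - gf i x0 <= `|gf i x0| by rewrite ler_normr lexx orbT.
  have h2 : 0 <= \sum_(j | j != i) `|gf j x0| by apply: sumr_ge0 => j _.
  lra.
have [xb [db [hb _]]] := reduce hN sx0 lx0 (leqnn _).
pose Pk := fun (k : ({set V} * {set 'I_N})%type) (a : F) =>
  exists x, basic x a /\ k = (supp x, tight x a).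
have hf : forall k a b, Pk k a -> Pk k b -> a = b.
  move=> k a b [x1 [hb1 ->]] [x2 [[s2 [l2 _]] [e1 e2]]].
  exact: (basic_uniq hb1 s2 l2).
have [k [a [[xs [hbs ek]] hmax]]] := rel_max hf (ex_intro _ _ (ex_intro _ db (ex_intro _ xb (conj hb erefl)))).
exists xs, a; case: (hbs) => sxs [lxs _]; split; [|split; [|split]] => //.
- move=> x' d' sx' lx'.
  have [x'' [d'' [hb'' hle]]] := reduce hN sx' lx' (leqnn _).
  apply: le_trans hle _; apply: (hmax (supp x'', tight x'' d'')).
  by exists x''.
- exact: supp_basic hbs.
Qed.

End Core.

Section Inst.
Local Open Scope ring_scope.
Variables (G N L : nat) (src dst : 'I_L -> vertex G N) (S : 'I_L -> R) (n : R)
  (Intf : 'I_L -> 'I_L -> R).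

Definition gm l A := gamma S n Intf l A.
Definition ec (i : 'I_N) (A : {set 'I_L}) : R :=
  \sum_(l | dst l == inr i) (if l \in A then gm l A else 0)
  - \sum_(k | src k == inr i) (if k \in A then gm k A else 0).
Definition rr (x : {set 'I_L} -> R) l : R :=
  \sum_(A | (A != set0) && (l \in A)) x A * gm l A.

Lemma sum_rr x (D : pred 'I_L) : \sum_(l | D l) rr x l =
  \sum_(A | A != set0) x A * \sum_(l | D l) (if l \in A then gm l A else 0).
Proof.
rewrite /rr; under eq_bigr do rewrite big_mkcondr /=.
rewrite exchange_big /=; apply: eq_bigr => A _; rewrite mulr_sumr.
by apply: eq_bigr => l _; case: ifP; rewrite ?mulr0.
Qed.

Lemma key x i : \sum_(l | dst l == inr i) rr x l - \sum_(k | src k == inr i) rr x k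
  = \sum_(A | A != set0) x A * ec i A.
Proof. by rewrite !sum_rr -sumrB; apply: eq_bigr => A _; rewrite mulrBr. Qed.

End Inst.

Unset Implicit Arguments. Set Strict Implicit.

Theorem theorem1 (G N L : nat) (hG : (0 < G)%N) (hN : (1 <= N)%N) (hL : (0 < L)%N)
  (src dst : 'I_L -> vertex G N)
  (hloop : forall l : 'I_L, src l <> dst l)
  (S : 'I_L -> R) (hS : forall l, S l > 0)
  (n : R) (hn : n > 0)
  (Intf : 'I_L -> 'I_L -> R) (hI : forall k l : 'I_L, k <> l -> Intf k l >= 0)
  (alpha : 'I_N -> R) (halpha : forall i, alpha i > 0) :
  exists (x : {set 'I_L} -> R) (r : 'I_L -> R) (dv : 'I_N -> R) (d : R),
    optimal src dst S n Intf alpha x r dv d /\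
    exists supp : {set {set 'I_L}},
      (#|supp| <= N)%N /\
      (forall A : {set 'I_L}, A != set0 -> A \notin supp -> x A = 0).
Proof.
pose c := fun (i : 'I_N) (A : {set 'I_L}) => (ec src dst S n Intf i A / alpha i)%R.
have hne : exists A : {set 'I_L}, A != set0.
  by exists [set Ordinal hL]; apply/set0Pn; exists (Ordinal hL); rewrite inE.
have [x [d [[px sx] [lx [opt hcard]]]]] :=
  @core R {set 'I_L} N (fun A => A != set0) c hN hne.
have hal : forall i, (0 < alpha i)%R by move=> i; apply/RltP; exact: halpha.
have lev_iff : forall (x' : {set 'I_L} -> R) d' i,
    (d' <= gf (fun A => A != set0) c i x')%R <->
    (alpha i * d' <= \sum_(A | A != set0) x' A * ec src dst S n Intf i A)%R.
  move=> x' d' i.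
  have -> : gf (fun A => A != set0) c i x' =
     ((\sum_(A | A != set0) x' A * ec src dst S n Intf i A) / alpha i)%R.
    rewrite /gf /c mulr_suml; apply: eq_bigr => A _; rewrite mulrC mulrA.
    by rewrite [(x' A * _)%R]mulrC.
  by rewrite ler_pdivlMr // mulrC.
have feas : forall x' r' dv' d', feasible src dst S n Intf alpha x' r' dv' d' ->
    simp (fun A => A != set0) x' /\ lev (fun A => A != set0) c x' d'.
  move=> x' r' dv' d' [s1 [s2 [s3 [s4 s5]]]]; split; first split.
  - by move=> A hA; apply/RleP; apply: Rge_le; apply: s5.
  - exact: s1.
  move=> i; apply/lev_iff.
  have e : (\sum_(l | dst l == inr i) r' l - \sum_(k | src k == inr i) r' k)%R =
     (\sum_(l | dst l == inr i) rr S n Intf x' l - \sum_(k | src k == inr i) rr S n Intf x' k)%R.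
    by congr (_ - _)%R; apply: eq_bigr => l _; rewrite s2.
  have h3 : (\sum_(l | dst l == inr i) r' l - \sum_(k | src k == inr i) r' k)%R = dv' i
    := s3 i.
  rewrite -(key src dst) -e h3; move: (s4 i).
  by move=> h; apply/RleP; apply: Rge_le.
exists x, (rr S n Intf x),
  (fun i => \sum_(l | dst l == inr i) rr S n Intf x l - \sum_(k | src k == inr i) rr S n Intf x k)%R, d.
split.
  split.
    split; first exact: sx.
    split; first by [].
    split; first by [].
    split.
      move=> i; apply: Rle_ge; apply/RleP; rewrite (key src dst); apply/lev_iff; exact: lx.
    by move=> A hA; apply: Rle_ge; apply/RleP; apply: px.
  move=> x' r' dv' d' hf; have [h1 h2] := feas _ _ _ _ hf.
  by apply/RleP; apply: opt h1 h2.
exists (supp (fun A => A != set0) x); split; first exact: hcard.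
move=> A hA hn0; apply/eqP; move: hn0; rewrite inE hA /=.
by rewrite negbK.
Qed.
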